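(* Let $N=\{1,\dots,n\}$, let $\tilde Q\in\mathbb{R}^{n\times n}$ be symmetric positive definite, $\tilde d\in\mathbb{R}^n$, and $a,b\in\mathbb{R}^n$ with $b\le a$ componentwise. Let $A,B\subseteq N$ be disjoint, $I=N\setminus(A\cup B)$, and let $(x,s,t)$ be the KKT solution for $(A,B)$. Let $C=\{i: x_i<b_i \text{ or } s_i<0\}$, $D=\{i: x_i>a_i \text{ or } t_i>0\}$, and let $(y,u,v)$ be the KKT solution for $(C,D)$. Define $S=\{i\in A: s_i\ge0\}$, $T=\{i\in B: t_i\le 0\}$, $U=\{i\in I: x_i<b_i\}$, $V=\{i\in I: x_i>a_i\}$, $W=U\cup V$, $\overline W=N\setminus W$, $R=I\setminus W$, $K=\{i\in S\cup T\cup R: y_i<b_i\}$, $L=\{i\in S\cup T\cup R: y_i>a_i\}$ and $z=y-x$. Then for all real $c,d$, $$L_{c,d}(y,u,v)-L_{c,d}(x,s,t)=\tfrac12\big(z_W^{\top}\tilde Q_W z_W-z_{\overline W}^{\top}\tilde Q_{\overline W}z_{\overline W}\big)+\tfrac c2\sum_{i\in K}|y_i-b_i|^2+\tfrac d2\sum_{i\in L}|y_i-a_i|^2-\tfrac c2\sum_{i\in U}|x_i-b_i|^2-\tfrac d2\sum_{i\in V}|x_i-a_i|^2.$$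
   Context: For disjoint $A_1,A_2\subseteq N$, the KKT solution for $(A_1,A_2)$ is the unique triple $(x,s,t)\in(\mathbb{R}^n)^3$ with $x_{A_1}=b_{A_1}$, $x_{A_2}=a_{A_2}$, $s_i=0$ for $i\notin A_1$, $t_i=0$ for $i\notin A_2$, and $\tilde Qx+\tilde d+s+t=0$. The merit function is $L_{c,d}(x,s,t)=\tilde J(x)+\frac c2\|g(x)\|^2+\frac d2\|h(x)\|^2$ with $\tilde J(x)=\tfrac12x^{\top}\tilde Qx+\tilde d^{\top}x$, $g(x)=\max(b-x,0)$, $h(x)=\max(x-a,0)$ componentwise. For $M\subseteq N$, $z_M$ is the subvector of $z$ indexed by $M$ and $\tilde Q_M$ the principal submatrix of $\tilde Q$ indexed by $M$. *)

(* Defs.v *)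
From HB Require Import structures.
From mathcomp Require Import all_boot all_order all_algebra.
Set Implicit Arguments. Unset Strict Implicit. Unset Printing Implicit Defensive.
Import Order.TTheory GRing.Theory Num.Theory.
Local Open Scope ring_scope.

Section Defs.
Variables (R : realFieldType) (n : nat).

Definition sym_posdef (Q : 'M[R]_n) : Prop :=
  Q^T = Q /\ forall v : 'cV[R]_n, v != 0 -> 0 < (v^T *m Q *m v) 0 0.

(* (x,s,t) is the KKT solution for (A1,A2) (unique when Q is positive definite
   and A1, A2 are disjoint). *)
Definition KKT (Q : 'M[R]_n) (dt a b : 'cV[R]_n) (A1 A2 : {set 'I_n})
  (x s t : 'cV[R]_n) : Prop :=
  [/\ forall i, i \in A1 -> x i 0 = b i 0,
      forall i, i \in A2 -> x i 0 = a i 0,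
      forall i, i \notin A1 -> s i 0 = 0,
      forall i, i \notin A2 -> t i 0 = 0 &
      Q *m x + dt + s + t = 0].

Definition Jt (Q : 'M[R]_n) (dt x : 'cV[R]_n) : R :=
  2^-1 * (x^T *m Q *m x) 0 0 + (dt^T *m x) 0 0.

Definition gnorm2 (b x : 'cV[R]_n) : R :=
  \sum_i (Num.max (b i 0 - x i 0) 0) ^+ 2.

Definition hnorm2 (a x : 'cV[R]_n) : R :=
  \sum_i (Num.max (x i 0 - a i 0) 0) ^+ 2.

Definition merit (Q : 'M[R]_n) (dt a b : 'cV[R]_n) (c d : R)
  (x s t : 'cV[R]_n) : R :=
  Jt Q dt x + c / 2 * gnorm2 b x + d / 2 * hnorm2 a x.

Definition subquad (Q : 'M[R]_n) (M : {set 'I_n}) (z : 'cV[R]_n) : R :=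
  \sum_(i in M) \sum_(j in M) z i 0 * Q i j * z j 0.

End Defs.

(* Main.v *)
Require Import Defs.
From HB Require Import structures.
From mathcomp Require Import all_boot all_order all_algebra.
From mathcomp Require Import ring lra.
Import Order.TTheory GRing.Theory Num.Theory.
Local Open Scope ring_scope.

Lemma quad_sum (R : realFieldType) n (Q : 'M[R]_n) (v : 'cV[R]_n) :
  (v^T *m Q *m v) 0 0 = \sum_i \sum_j v i 0 * Q i j * v j 0.
Proof.
rewrite !mxE exchange_big /=; apply: eq_bigr => i _.
rewrite mxE mulr_suml; apply: eq_bigr => j _; by rewrite !mxE.
Qed.

Lemma lin_sum (R : realFieldType) n (dt v : 'cV[R]_n) :
  (dt^T *m v) 0 0 = \sum_i dt i 0 * v i 0.
Proof. by rewrite !mxE; apply: eq_bigr => i _; rewrite mxE. Qed.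

Lemma core (R : realFieldType) n (Q : 'M[R]_n) (xf zf stf uvf df : 'I_n -> R)
  (W : {set 'I_n}) :
  (forall i j, Q i j = Q j i) ->
  (forall i, \sum_j Q i j * xf j + df i + stf i = 0) ->
  (forall i, \sum_j Q i j * zf j = stf i - uvf i) ->
  (forall i, i \in W -> stf i = 0) ->
  (forall i, i \notin W -> uvf i * zf i = 0) ->
  2^-1 * (\sum_i \sum_j (xf i + zf i) * Q i j * (xf j + zf j))
   + \sum_i df i * (xf i + zf i)
  - (2^-1 * (\sum_i \sum_j xf i * Q i j * xf j) + \sum_i df i * xf i)
  = 2^-1 * (\sum_(i in W) \sum_(j in W) zf i * Q i j * zf j
            - \sum_(i in ~: W) \sum_(j in ~: W) zf i * Q i j * zf j).
Proof.
move=> Qs Ex Ez HW HnW.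
pose G i := \sum_j Q i j * xf j.
have E1 : \sum_i \sum_j (xf i + zf i) * Q i j * (xf j + zf j) =
   \sum_i \sum_j xf i * Q i j * xf j + 2 * \sum_i zf i * G i
   + \sum_i \sum_j zf i * Q i j * zf j.
  have A1 : \sum_i \sum_j xf i * Q i j * zf j = \sum_i zf i * G i.
    rewrite exchange_big /=; apply: eq_bigr => i _; rewrite /G mulr_sumr.
    by apply: eq_bigr => j _; rewrite (Qs j i); ring.
  have A2 : \sum_i \sum_j zf i * Q i j * xf j = \sum_i zf i * G i.
    apply: eq_bigr => i _; rewrite /G mulr_sumr.
    by apply: eq_bigr => j _; ring.
  rewrite (_ : 2 * _ = \sum_i zf i * G i + \sum_i zf i * G i); last by ring.
  rewrite -{1}A1 -A2 -!big_split /=.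
  apply: eq_bigr => i _; rewrite -!big_split /=; apply: eq_bigr => j _; ring.
have E2 : \sum_i df i * (xf i + zf i) = \sum_i df i * xf i + \sum_i df i * zf i.
  by rewrite -big_split /=; apply: eq_bigr => i _; ring.
have E3 : \sum_i zf i * G i + \sum_i df i * zf i = - \sum_i zf i * stf i.
  rewrite -big_split -sumrN /=; apply: eq_bigr => i _.
  have := Ex i; rewrite -/(G i) => h.
  have -> : stf i = - (G i + df i) by lra.
  ring.
pose f i j := zf i * Q i j * zf j.
pose M (P1 P2 : {set 'I_n}) := \sum_(i in P1) \sum_(j in P2) f i j.
have S1 : forall F : 'I_n -> R, \sum_i F i = \sum_(i in W) F i + \sum_(i in ~: W) F i.
  move=> F; rewrite (bigID (fun i => i \in W)) /=; congr (_ + _).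
  by apply: eq_bigl => i; rewrite inE.
have Hin : forall P : {set 'I_n}, \sum_(i in P) \sum_j f i j = M P W + M P (~: W).
  by move=> P; rewrite /M -big_split; apply: eq_bigr => i _; rewrite S1.
have E4 : \sum_i \sum_j f i j = M W W + M W (~: W) + M (~: W) W + M (~: W) (~: W).
  by rewrite S1 !Hin; ring.
have E5 : M W (~: W) = M (~: W) W.
  rewrite /M exchange_big /=; apply: eq_bigr => i _; apply: eq_bigr => j _.
  by rewrite /f Qs; ring.
have E6 : M W (~: W) + M (~: W) (~: W) = \sum_i zf i * stf i.
  rewrite /M -(S1 (fun i => \sum_(j in ~: W) f i j)) exchange_big /=.
  transitivity (\sum_(j in ~: W) zf j * stf j).
    apply: eq_bigr => j; rewrite inE => hj.
    have h2 := HnW j hj.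
    have -> : zf j * stf j = zf j * (stf j - uvf j) by rewrite mulrBr [zf j * uvf j]mulrC h2 subr0.
    rewrite -Ez mulr_sumr; apply: eq_bigr => i _; rewrite /f Qs; ring.
  rewrite [RHS]S1 [X in _ = X + _]big1 ?add0r // => i hi; by rewrite HW // mulr0.
rewrite E1 E2.
have -> : \sum_i \sum_j zf i * Q i j * zf j = \sum_i \sum_j f i j by [].
rewrite E4 /M /f.
move: E3 E5 E6; rewrite /M /f => E3 E5 E6.
lra.
Qed.
Theorem mainTheorem3 (R : realFieldType) (n : nat)
  (Q : 'M[R]_n) (dt a b : 'cV[R]_n)
  (A B : {set 'I_n}) (x s t y u v : 'cV[R]_n) :
  sym_posdef Q ->
  (forall i, b i 0 <= a i 0) ->
  [disjoint A & B] ->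
  KKT Q dt a b A B x s t ->
  let I := ~: (A :|: B) in
  let C := [set i | (x i 0 < b i 0) || (s i 0 < 0)] in
  let D := [set i | (x i 0 > a i 0) || (t i 0 > 0)] in
  KKT Q dt a b C D y u v ->
  let S := [set i in A | s i 0 >= 0] in
  let T := [set i in B | t i 0 <= 0] in
  let U := [set i in I | x i 0 < b i 0] in
  let V := [set i in I | x i 0 > a i 0] in
  let W := U :|: V in
  let Wbar := ~: W in
  let Rs := I :\: W in
  let K := [set i in S :|: T :|: Rs | y i 0 < b i 0] in
  let L := [set i in S :|: T :|: Rs | y i 0 > a i 0] in
  let z := y - x in
  forall c d : R,
    merit Q dt a b c d y u v - merit Q dt a b c d x s t =
      2^-1 * (subquad Q W z - subquad Q Wbar z)
      + c / 2 * \sum_(i in K) `|y i 0 - b i 0| ^+ 2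
      + d / 2 * \sum_(i in L) `|y i 0 - a i 0| ^+ 2
      - c / 2 * \sum_(i in U) `|x i 0 - b i 0| ^+ 2
      - d / 2 * \sum_(i in V) `|x i 0 - a i 0| ^+ 2.
Proof.
move=> [QT _] Hba Hdis [xA xB sA tB Ex] I C D [yC yD uC vD Ey] S T U V W Wbar Rs K L z c d.
have Qs : forall i j, Q i j = Q j i.
  by move=> i j; have := congr1 (fun M : 'M[R]_n => M j i) QT; rewrite mxE.
have Exi : forall i, \sum_j Q i j * x j 0 + dt i 0 + (s i 0 + t i 0) = 0.
  move=> i; have := congr1 (fun M : 'cV[R]_n => M i 0) Ex; rewrite !mxE => h; lra.
have Eyi : forall i, \sum_j Q i j * y j 0 + dt i 0 + (u i 0 + v i 0) = 0.
  move=> i; have := congr1 (fun M : 'cV[R]_n => M i 0) Ey; rewrite !mxE => h; lra.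
have Ezi : forall i, \sum_j Q i j * z j 0 = (s i 0 + t i 0) - (u i 0 + v i 0).
  move=> i; rewrite /z.
  under eq_bigr do rewrite !mxE mulrBr.
  rewrite sumrB; have := Exi i; have := Eyi i; lra.
have inI : forall i, (i \in I) = (i \notin A) && (i \notin B).
  by move=> i; rewrite /I !inE negb_or.
have inC : forall i, (i \in C) = (x i 0 < b i 0) || (s i 0 < 0) by move=> i; rewrite /C inE.
have inD : forall i, (i \in D) = (x i 0 > a i 0) || (t i 0 > 0) by move=> i; rewrite /D inE.
have inW : forall i, (i \in W) = (i \notin A) && (i \notin B) &&
     ((x i 0 < b i 0) || (x i 0 > a i 0)).
  move=> i; rewrite /W /U /V !inE.
  by case: (i \in A); case: (i \in B); case: (x i 0 < b i 0).
have inSTR : forall i, (i \in S :|: T :|: Rs) = (i \notin C) && (i \notin D).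
  move=> i; rewrite /S /T /Rs !in_setU in_setD inW inC inD inI !inE.
  case hA: (i \in A).
    have hB := disjointFr Hdis hA.
    rewrite hB /= xA // (tB i) ?hB // ltxx [a i 0 < b i 0]ltNge Hba /= -leNgt.
    by rewrite ltxx !orbF andbT.
  case hB: (i \in B).
    rewrite /= xB // (sA i) ?hA // ltxx [a i 0 < b i 0]ltNge Hba /= orbF. by rewrite ltxx /= -leNgt.
  rewrite /= (sA i) ?hA // (tB i) ?hB // ltxx /= !orbF.
  by rewrite andbT negb_or.
have sq : forall r : R, `|r| ^+ 2 = r ^+ 2 by move=> r; rewrite real_normK ?num_real.
have G1 : gnorm2 b y = \sum_(i in K) `|y i 0 - b i 0| ^+ 2.
  rewrite /gnorm2 [RHS]big_mkcond; apply: eq_bigr => i _.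
  rewrite /K inE inSTR sq.
  case: (ltP (y i 0) (b i 0)) => h.
    have hC : i \notin C by apply/negP => /yC e; move: h; rewrite e ltxx.
    have hD : i \notin D.
      by apply/negP => /yD e; move: h; rewrite e ltNge Hba.
    rewrite hC hD /= max_l; [ring | lra].
  by rewrite andbF max_r ?expr0n //; lra.
have G2 : hnorm2 a y = \sum_(i in L) `|y i 0 - a i 0| ^+ 2.
  rewrite /hnorm2 [RHS]big_mkcond; apply: eq_bigr => i _.
  rewrite /L inE inSTR sq.
  case: (ltP (a i 0) (y i 0)) => h.
    have hC : i \notin C.
      by apply/negP => /yC e; move: h; rewrite e ltNge Hba.
    have hD : i \notin D by apply/negP => /yD e; move: h; rewrite e ltxx.
    rewrite hC hD /= max_l; [ring | lra].
  by rewrite andbF max_r ?expr0n //; lra.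
have G3 : gnorm2 b x = \sum_(i in U) `|x i 0 - b i 0| ^+ 2.
  rewrite /gnorm2 [RHS]big_mkcond; apply: eq_bigr => i _.
  rewrite /U inE inI sq.
  case: (ltP (x i 0) (b i 0)) => h.
    have hA : i \notin A by apply/negP => /xA e; move: h; rewrite e ltxx.
    have hB : i \notin B.
      by apply/negP => /xB e; move: h; rewrite e ltNge Hba.
    rewrite hA hB /= max_l; [ring | lra].
  by rewrite andbF max_r ?expr0n //; lra.
have G4 : hnorm2 a x = \sum_(i in V) `|x i 0 - a i 0| ^+ 2.
  rewrite /hnorm2 [RHS]big_mkcond; apply: eq_bigr => i _.
  rewrite /V inE inI sq.
  case: (ltP (a i 0) (x i 0)) => h.
    have hA : i \notin A.
      by apply/negP => /xA e; move: h; rewrite e ltNge Hba.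
    have hB : i \notin B by apply/negP => /xB e; move: h; rewrite e ltxx.
    rewrite hA hB /= max_l; [ring | lra].
  by rewrite andbF max_r ?expr0n //; lra.
have HW : forall i, i \in W -> s i 0 + t i 0 = 0.
  move=> i; rewrite inW => /andP [/andP [hA hB] _].
  by rewrite sA ?tB ?addr0.
have HnW : forall i, i \notin W -> (u i 0 + v i 0) * z i 0 = 0.
  move=> i; rewrite inW => hW.
  have zE : z i 0 = y i 0 - x i 0 by rewrite /z !mxE.
  case hC: (i \in C).
    suff -> : z i 0 = 0 by rewrite mulr0.
    rewrite zE yC //.
    case hA: (i \in A); first by rewrite xA // subrr.
    move: hC; rewrite inC sA ?hA // ltxx orbF => h.
    case hB: (i \in B); first by move: h; rewrite xB // ltNge Hba.
    by move: hW; rewrite hA hB h.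
  case hD: (i \in D).
    suff -> : z i 0 = 0 by rewrite mulr0.
    rewrite zE yD //.
    case hB: (i \in B); first by rewrite xB // subrr.
    move: hD; rewrite inD tB ?hB // ltxx orbF => h.
    case hA: (i \in A); first by move: h; rewrite xA // ltNge Hba.
    by move: hW; rewrite hA hB h orbT.
  by rewrite uC ?hC // vD ?hD // addr0 mul0r.
have J5 : Jt Q dt y - Jt Q dt x = 2^-1 * (subquad Q W z - subquad Q Wbar z).
  have hy : y = x + z by rewrite /z addrC subrK.
  clearbody z; rewrite /Jt hy !quad_sum !lin_sum.
  under eq_bigr do under eq_bigr do rewrite !mxE.
  under [X in _ + X - _]eq_bigr do rewrite !mxE.
  rewrite /subquad /Wbar; exact: (@core R n Q (fun i => x i 0) (fun i => z i 0) (fun i => s i 0 + t i 0) (fun i => u i 0 + v i 0) (fun i => dt i 0) W Qs Exi Ezi HW HnW).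
rewrite /merit G1 G2 G3 G4.
move: J5; set JY := Jt Q dt y; set JX := Jt Q dt x => J5.
have -> : JY = JX + 2^-1 * (subquad Q W z - subquad Q Wbar z) by rewrite -J5 addrC subrK.
ring.
Qed.
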